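(* Let $N\ge1$, $f:\mathbb{N}^N\to\mathbb{N}$, $k\ge0$ and $\boldsymbol{\ell}\in\mathbb{N}^N$. Then: (a) if $k$ is even and $\boldsymbol{\ell}$ has at least one odd entry, $\binom{k}{\boldsymbol{\ell}}_f\equiv 0\pmod 2$; (b) if $k$ is even and all entries of $\boldsymbol{\ell}$ are even, $\binom{k}{\boldsymbol{\ell}}_f\equiv\binom{k/2}{\boldsymbol{\ell}/2}_f\pmod 2$; (c) if $k$ is odd, $\displaystyle\binom{k}{\boldsymbol{\ell}}_f\equiv\sum_{\mathbf{s}}f(\mathbf{s})\binom{\lfloor k/2\rfloor}{(\boldsymbol{\ell}-\mathbf{s})/2}_f\pmod 2$, the sum over all $\mathbf{s}\in\mathbb{N}^N$ such that $\boldsymbol{\ell}-\mathbf{s}\in\mathbb{N}^N$ has only even entries.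
   Context: $\mathbb{N}=\{0,1,2,\dots\}$. For $k\ge0$ and $\mathbf{x}\in\mathbb{N}^N$, $\binom{k}{\mathbf{x}}_f=\sum_{\mathbf{m}_1+\cdots+\mathbf{m}_k=\mathbf{x}} f(\mathbf{m}_1)\cdots f(\mathbf{m}_k)$ over tuples of vectors in $\mathbb{N}^N$ (the number of $f$-weighted vector compositions of $\mathbf{x}$ with $k$ parts). *)

(* Defs.v *)
From mathcomp Require Import all_boot.
Set Implicit Arguments. Unset Strict Implicit. Unset Printing Implicit Defensive.

Definition vec (N : nat) := {ffun 'I_N -> nat}.

Definition vbound N (x : vec N) : nat := \sum_(j < N) x j.

(* binom(k, x)_f = sum over k-tuples (m_1,...,m_k) of vectors in N^N with
   m_1 + ... + m_k = x of f(m_1)...f(m_k).  Every such m_i satisfies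
   m_i <= x componentwise, so all entries lie in [0, vbound x]; the sum
   below ranges over all such tuples (entries encoded as ordinals). *)
Definition fcomp N (f : vec N -> nat) (k : nat) (x : vec N) : nat :=
  \sum_(t : {ffun 'I_k -> {ffun 'I_N -> 'I_(vbound x).+1}}
          | [forall j : 'I_N, \sum_(i < k) (t i j : nat) == x j])
     \prod_(i < k) f [ffun j => (t i j : nat)].

Definition vhalf N (x : vec N) : vec N := [ffun j => x j %/ 2].
Definition vsub N (x y : vec N) : vec N := [ffun j => x j - y j].

(* Main.v *)
Require Import Defs.
From mathcomp Require Import all_boot zify.
Set Implicit Arguments. Unset Strict Implicit. Unset Printing Implicit Defensive.

Lemma sum_invol (T : finType) (P : pred T) (s : T -> T) (F : T -> nat) :
  (forall i, P i -> P (s i)) -> (forall i, P i -> s (s i) = i) ->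
  (forall i, P i -> F (s i) = F i) ->
  \sum_(i | P i) F i = \sum_(i | P i && (s i == i)) F i %[mod 2].
Proof.
move=> Ps ss Fs.
rewrite (bigID (fun i => s i == i)) /=.
rewrite [X in _ + X](bigID (fun i => enum_rank i < enum_rank (s i))) /=.
set A := \sum_(i | _ && (_ < _)) F i.
set X := \sum_(i | _ && ~~ _) F i.
have -> : X = A.
  rewrite /X (reindex_onto s s); last first.
    by move=> i /andP[/andP[Pi _] _]; rewrite ss.
  apply: eq_big => [j|j /andP[/andP[/andP[Psj _] _] /eqP ssj]]; last first.
    have Pj : P j by rewrite -ssj Ps.
    by rewrite Fs.
  apply/idP/idP.
    case/andP=> /andP[/andP[Psj nsj] nlt] /eqP ssj.
    have Pj : P j by rewrite -ssj Ps.
    rewrite Pj /= ssj in nsj nlt *; rewrite eq_sym nsj /=.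
    rewrite ltn_neqAle leqNgt nlt andbT.
    by apply: contra nsj => /eqP H; rewrite -(@enum_rank_inj T _ _ (val_inj H)).
  case/andP=> /andP[Pj nsj] lt.
  rewrite Ps //= ss // eqxx andbT (eq_sym j) nsj /= -leqNgt ltnW //.
by rewrite addnn -muln2 addnC modnMDl.
Qed.

Definition Cb N (f : vec N -> nat) B k (x : vec N) : nat :=
  \sum_(t : {ffun 'I_k -> {ffun 'I_N -> 'I_B.+1}}
          | [forall j : 'I_N, \sum_(i < k) (t i j : nat) == x j])
     \prod_(i < k) f [ffun j => (t i j : nat)].

Lemma fcompE N f k (x : vec N) : fcomp f k x = Cb f (vbound x) k x.
Proof. by []. Qed.

Lemma leq_term_sum k (F : 'I_k -> nat) i : F i <= \sum_(i0 < k) F i0.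
Proof. by rewrite (bigD1 i) //= leq_addr. Qed.

Lemma Cb_S N f B k (x : vec N) : (forall j, x j <= B) -> Cb f B k x = Cb f B.+1 k x.
Proof.
move=> xB.
pose wid (t : {ffun 'I_k -> {ffun 'I_N -> 'I_B.+1}}) : {ffun 'I_k -> {ffun 'I_N -> 'I_B.+2}} :=
  [ffun i => [ffun j => widen_ord (leqnSn _) (t i j)]].
pose nar (t : {ffun 'I_k -> {ffun 'I_N -> 'I_B.+2}}) : {ffun 'I_k -> {ffun 'I_N -> 'I_B.+1}} :=
  [ffun i => [ffun j => inord (t i j)]].
rewrite /Cb [RHS](reindex_onto wid nar); last first.
  move=> t /forallP cond; apply/ffunP => i; apply/ffunP => j; apply: val_inj.
  rewrite !ffunE /= inordK // ltnS (leq_trans _ (xB j)) //.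
  by rewrite -(eqP (cond j)) (leq_term_sum (fun i => (t i j : nat))).
apply: eq_big => [t|t _].
  have -> : nar (wid t) == t.
    apply/eqP/ffunP => i; apply/ffunP => j; apply: val_inj.
    by rewrite !ffunE /= inordK // ltnS (leq_trans (ltn_ord _)).
  rewrite andbT; apply: eq_forallb => j.
  by congr (_ == _); apply: eq_bigr => i _; rewrite /wid !ffunE.
apply: eq_bigr => i _; congr f; apply/ffunP => j; by rewrite /wid !ffunE.
Qed.

Lemma muln_sumr I (r : seq I) (P : pred I) (F : I -> nat) a :
  a * \sum_(i <- r | P i) F i = \sum_(i <- r | P i) a * F i.
Proof. by elim/big_rec2: _ => [|i y1 y2 _ <-]; rewrite ?muln0 ?mulnDr. Qed.

Lemma Cb_rec N f B k (x : vec N) :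
  Cb f B k.+1 x = \sum_(m : {ffun 'I_N -> 'I_B.+1} | [forall j, m j <= x j])
     f [ffun j => (m j : nat)] * Cb f B k (vsub x [ffun j => (m j : nat)]).
Proof.
pose g (p : {ffun 'I_N -> 'I_B.+1} * {ffun 'I_k -> {ffun 'I_N -> 'I_B.+1}}) : {ffun 'I_k.+1 -> {ffun 'I_N -> 'I_B.+1}} :=
  [ffun i => if unlift ord0 i is Some i' then p.2 i' else p.1].
pose h (t : {ffun 'I_k.+1 -> {ffun 'I_N -> 'I_B.+1}}) : {ffun 'I_N -> 'I_B.+1} * {ffun 'I_k -> {ffun 'I_N -> 'I_B.+1}} := (t ord0, [ffun i => t (lift ord0 i)]).
have g0 p : g p ord0 = p.1 by rewrite /g ffunE unlift_none.
have gS p i : g p (lift ord0 i) = p.2 i by rewrite /g ffunE liftK.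
have gK : cancel h g.
  move=> t; apply/ffunP => i; rewrite /g ffunE; case: unliftP => [i' ->|->] /=; by rewrite ?ffunE.
have hK : cancel g h.
  by case=> a r; rewrite /h g0; congr pair; apply/ffunP => i; rewrite ffunE gS.
rewrite /Cb (reindex g); last by apply: onW_bij; exact: Bijective hK gK.
rewrite big_mkcond /=.
rewrite -(pair_bigA _ (fun a r => if [forall j, \sum_(i < k.+1) (g (a, r) i j : nat) == x j]
   then \prod_(i < k.+1) f [ffun j => (g (a, r) i j : nat)] else 0)) /=.
rewrite [RHS]big_mkcond; apply: eq_bigr => a _.
case: ifP => ax.
  rewrite muln_sumr [RHS]big_mkcond /=; apply: eq_bigr => r _.
  have -> : [forall j, \sum_(i < k.+1) (g (a, r) i j : nat) == x j] =
            [forall j, \sum_(i < k) (r i j : nat) == vsub x [ffun j => (a j : nat)] j].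
    apply: eq_forallb => j; rewrite big_ord_recl g0 /=.
    under eq_bigr do rewrite gS.
    rewrite /vsub !ffunE /=; move/forallP: ax => /(_ j).
    move: (\sum_(i < k) _) => s ?; apply/eqP/eqP; lia.
  case: ifP => // _; rewrite big_ord_recl g0; congr (f _ * _).
  by apply: eq_bigr => i _; rewrite gS.
apply: big1 => r _; case: ifP => // /forallP H; move/negbT: ax; case/forallPn=> j.
move: (H j); rewrite big_ord_recl g0 /= => /eqP <-; by rewrite leq_addr.
Qed.

Section Main.
Variables (N : nat) (f : vec N -> nat) (B : nat).

Definition conv (g h : vec N -> nat) (x : vec N) : nat :=
  \sum_(m : {ffun 'I_N -> 'I_B.+1} | [forall j, m j <= x j])
     g [ffun j => (m j : nat)] * h (vsub x [ffun j => (m j : nat)]).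

Definition Dh (g : vec N -> nat) (x : vec N) : nat :=
  if [forall j, ~~ odd (x j)] then g (vhalf x) else 0.

Lemma sum_cong (T : finType) (P : pred T) (F G : T -> nat) :
  (forall i, P i -> F i = G i %[mod 2]) ->
  \sum_(i | P i) F i = \sum_(i | P i) G i %[mod 2].
Proof.
move=> H; rewrite -modn_summ -[in RHS]modn_summ; congr (_ %% _).
by apply: eq_bigr => i /H.
Qed.

Lemma conv_cong h g g' x : (forall y, g y = g' y %[mod 2]) ->
  conv h g x = conv h g' x %[mod 2].
Proof.
move=> H; apply: sum_cong => m _.
by rewrite -modnMmr H modnMmr.
Qed.

Lemma conv_ext h g g' x : (forall y, g y = g' y) -> conv h g x = conv h g' x.
Proof. by move=> H; apply: eq_bigr => m _; rewrite H. Qed.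

Lemma Cb0 x : Cb f B 0 x = [forall j, x j == 0].
Proof.
rewrite /Cb (eq_bigl (fun _ => [forall j, 0 == x j])); last first.
  by move=> t; apply: eq_forallb => j; rewrite big_ord0.
rewrite big_mkcond /=.
under eq_bigr do rewrite big_ord0.
rewrite sum_nat_const card_ffun card_ord expn0 mul1n.
have -> : [forall j, 0 == x j] = [forall j, x j == 0].
  by apply: eq_forallb => j; rewrite eq_sym.
by case: ifP.
Qed.

Lemma Cb0_D x : Cb f B 0 x = Dh (Cb f B 0) x.
Proof.
rewrite /Dh !Cb0; case: ifP => H.
  congr nat_of_bool; apply: eq_forallb => j; rewrite ffunE.
  move/forallP: H => /(_ j) ?; apply/eqP/eqP; lia.
case: (boolP [forall j, x j == 0]) => // /forallP H'; move/negbT: H => /forallPn [j].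
by rewrite (eqP (H' j)).
Qed.

Lemma sqmod a c : a * (a * c) = a * c %[mod 2].
Proof. by rewrite !modn2 !oddM andbA andbb. Qed.

Lemma vsubC (x a b : vec N) : vsub (vsub x a) b = vsub (vsub x b) a.
Proof. by apply/ffunP => j; rewrite !ffunE subnAC. Qed.

Lemma KEY g x : conv f (conv f (Dh g)) x = Dh (conv f g) x %[mod 2].
Proof.
rewrite /conv; under eq_bigr => a _ do rewrite muln_sumr.
rewrite pair_big_dep /=.
set toV := fun m : {ffun 'I_N -> 'I_B.+1} => [ffun j => (m j : nat)].
rewrite (eq_bigl (fun p : {ffun 'I_N -> 'I_B.+1} * {ffun 'I_N -> 'I_B.+1} => [forall j, p.1 j + p.2 j <= x j])); last first.
  move=> [a b] /=; apply/idP/idP.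
    case/andP => /forallP H1 /forallP H2; apply/forallP => j.
    by move: (H1 j) (H2 j); rewrite !ffunE; lia.
  move/forallP => H; apply/andP; split; apply/forallP => j; move: (H j);
    rewrite ?ffunE; lia.
rewrite (sum_invol (s := fun p => (p.2, p.1))); first last.
- by move=> [a b] _ /=; rewrite vsubC mulnCA.
- by case.
- by move=> [a b] /= /forallP H; apply/forallP => j; rewrite addnC.
rewrite (reindex_onto (fun a => (a, a)) fst); last first.
  by move=> [a b] /andP[_ /eqP [->]].
rewrite /=.
under eq_bigl do rewrite !eqxx !andbT.
rewrite (sum_cong (G := fun a => f (toV a) * Dh g (vsub (vsub x (toV a)) (toV a)))); last first.
  by move=> a _; rewrite sqmod.
congr (_ %% 2).
rewrite /Dh; case: ifP => ev.
  apply: eq_big => [a|a /forallP H].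
    apply: eq_forallb => j; rewrite ffunE; move/forallP: ev => /(_ j); lia.
  have -> : [forall j, ~~ odd (vsub (vsub x (toV a)) (toV a) j)].
    apply/forallP => j; rewrite !ffunE; move/forallP: ev => /(_ j); move: (H j); lia.
  congr (_ * g _); apply/ffunP => j; rewrite !ffunE.
  move/forallP: ev => /(_ j); move: (H j); lia.
apply: big1 => a /forallP H; case: ifP; rewrite ?muln0 // => /forallP H2.
move/negbT: ev => /forallPn [j]; move: (H j) (H2 j); rewrite !ffunE; lia.
Qed.

Lemma Cb_conv k x : Cb f B k.+1 x = conv f (Cb f B k) x.
Proof. exact: Cb_rec. Qed.

Lemma even_case j x : Cb f B j.*2 x = Dh (Cb f B j) x %[mod 2].
Proof.
elim: j x => [|j IH] x; first by rewrite Cb0_D.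
rewrite doubleS Cb_conv (conv_ext _ _ (Cb_conv _)).
rewrite (conv_cong _ _ (fun y => conv_cong _ _ IH)) KEY.
by rewrite /Dh Cb_conv.
Qed.

End Main.

Lemma Cb_le N f B B' k (x : vec N) : (forall j, x j <= B) -> B <= B' ->
  Cb f B k x = Cb f B' k x.
Proof.
move=> xB /subnKC <-; elim: (B' - B) => [|d IH]; first by rewrite addn0.
by rewrite IH addnS Cb_S // => j; rewrite (leq_trans (xB j)) ?leq_addr.
Qed.

Lemma fcomp_C N f k (x l : vec N) : (forall j, x j <= l j) ->
  fcomp f k x = Cb f (vbound l) k x.
Proof.
move=> xl; rewrite fcompE; apply: Cb_le.
  by move=> j; rewrite /vbound (leq_term_sum (fun j => x j)).
by apply: leq_sum => j _.
Qed.

Theorem theorem5 (N : nat) (hN : 0 < N) (f : vec N -> nat) (k : nat) (l : vec N) :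
  (~~ odd k -> [exists j, odd (l j)] -> fcomp f k l = 0 %[mod 2]) /\
  (~~ odd k -> [forall j, ~~ odd (l j)] ->
     fcomp f k l = fcomp f (k %/ 2) (vhalf l) %[mod 2]) /\
  (odd k ->
     fcomp f k l =
       \sum_(s : {ffun 'I_N -> 'I_(vbound l).+1}
              | [forall j, (s j <= l j) && ~~ odd (l j - s j)])
          f [ffun j => (s j : nat)] *
          fcomp f (k %/ 2) (vhalf (vsub l [ffun j => (s j : nat)])) %[mod 2]).
Proof.
have hl : forall j, l j <= l j by [].
rewrite divn2 (fcomp_C f k hl).
have := odd_double_half k; set j0 := k./2 => kE.
split; last split.
- move=> ek /existsP [j oj].
  rewrite -kE (negbTE ek) add0n even_case /Dh; case: ifP => // /forallP H.
  by move: (H j); rewrite oj.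
- move=> ek ev.
  rewrite -kE (negbTE ek) add0n even_case /Dh ev.
  by rewrite (fcomp_C f _ (l := l)) // => j; rewrite ffunE leq_div.
move=> ok; rewrite -kE ok add1n Cb_conv.
rewrite (conv_cong _ _ _ (even_case f (vbound l) j0)).
congr (_ %% 2); rewrite /conv [LHS]big_mkcond [RHS]big_mkcond /=.
apply: eq_bigr => m _.
case: (boolP [forall j, m j <= l j]) => H; rewrite /Dh.
  have -> : [forall j, (m j <= l j) && ~~ odd (l j - m j)] =
            [forall j, ~~ odd (vsub l [ffun j => (m j : nat)] j)].
    apply: eq_forallb => j; move/forallP: H => /(_ j) ->; by rewrite !ffunE.
  case: ifP => _; rewrite ?muln0 //; congr (_ * _); symmetry; apply: fcomp_C => j.
  by rewrite !ffunE (leq_trans (leq_div _ _)) ?leq_subr.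
case: ifP => // /forallP H'; case/negP: H; apply/forallP => j.
by case/andP: (H' j).
Qed.
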